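(* Let $S$ be a dense subsemigroup of $((0,\infty),+)$, let $(X,\langle T_s\rangle_{s\in S})$ be a dynamical system, let $L$ be a minimal left ideal of $O^{+}(S)$, and let $x\in X$. The following statements are equivalent: (a) $x$ is a uniformly recurrent point near zero of $(X,\langle T_s\rangle_{s\in S})$; (b) there exists $u\in L$ such that $T_u(x)=x$; (c) there exist $y\in X$ and an idempotent $u\in L$ such that $T_u(y)=x$; (d) there exists an idempotent $u\in L$ such that $T_u(x)=x$.
   Context: ''Dense'' means dense in the usual topology of $(0,\infty)$. $\beta S$ is the Stone–Čech compactification of the discrete set $S$ (the space of ultrafilters on $S$, principal ultrafilters identified with points of $S$), with the operation $+$ extended so that $(\beta S,+)$ is a compact right topological semigroup: for $p,q\in\beta S$ and $A\subseteq S$, $A\in p+q$ iff $\{x\in S: -x+A\in q\}\in p$, where $-x+A=\{y\in S: x+y\in A\}$. Define $O^{+}(S)=\{p\in\beta S: S\cap(0,\epsilon)\in p \text{ for every } \epsilon>0\}$; it is a compact right topological subsemigroup of $\beta S$. A dynamical system $(X,\langle T_s\rangle_{s\in S})$ consists of a compact Hausdorff space $X$ and continuous maps $T_s:X\to X$ ($s\in S$) with $T_s\circ T_t=T_{s+t}$ for all $s,t\in S$. For $p\in\beta S$ and $x\in X$, $T_p(x)=p\text{-}\lim_{s\in S}T_s(x)$ (i.e. $T_p=\tilde\theta(p)$ where $\tilde\theta:\beta S\to X^X$ is the continuous extension of $s\mapsto T_s$); then $T_p\circ T_q=T_{p+q}$. A subset $B\subseteq S$ is syndetic near zero iff for every $\epsilon>0$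 there exist a finite nonempty $F\subseteq (0,\epsilon)\cap S$ and $\delta>0$ such that $S\cap(0,\delta)\subseteq\bigcup_{t\in F}(-t+B)$. A point $x\in X$ is uniformly recurrent near zero iff for each neighbourhood $W$ of $x$, the set $\{s\in S: T_s(x)\in W\}$ is syndetic near zero. *)

(* Defs.v *)
From Stdlib Require Import Reals List.
Open Scope R_scope.

Definition dense_subsemigroup (S : R -> Prop) : Prop :=
  (forall s, S s -> 0 < s) /\
  (forall s t, S s -> S t -> S (s + t)) /\
  (forall a b, 0 < a -> a < b -> exists s, S s /\ a < s < b).

(* An ultrafilter on S is a family p of subsets of S (given as predicates on R
   contained in S). *)
Definition ultrafilter (S : R -> Prop) (p : (R -> Prop) -> Prop) : Prop :=
  (forall A, p A -> forall x, A x -> S x) /\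
  p S /\
  ~ p (fun _ => False) /\
  (forall A B, p A -> (forall x, A x -> B x) -> (forall x, B x -> S x) -> p B) /\
  (forall A B, p A -> p B -> p (fun x => A x /\ B x)) /\
  (forall A, (forall x, A x -> S x) -> p A \/ p (fun x => S x /\ ~ A x)).

Definition shiftl (S : R -> Prop) (x : R) (A : R -> Prop) : R -> Prop :=
  fun y => S y /\ A (x + y).

Definition bplus (S : R -> Prop) (p q : (R -> Prop) -> Prop) : (R -> Prop) -> Prop :=
  fun A => (forall z, A z -> S z) /\ p (fun x => S x /\ q (shiftl S x A)).

Definition Oplus (S : R -> Prop) (p : (R -> Prop) -> Prop) : Prop :=
  ultrafilter S p /\
  forall eps, 0 < eps -> p (fun s => S s /\ 0 < s /\ s < eps).

Definition idempotent (S : R -> Prop) (u : (R -> Prop) -> Prop) : Prop :=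
  bplus S u u = u.

Definition left_ideal_Oplus (S : R -> Prop) (L : ((R -> Prop) -> Prop) -> Prop) : Prop :=
  (exists q, L q) /\
  (forall q, L q -> Oplus S q) /\
  (forall p q, Oplus S p -> L q -> L (bplus S p q)).

Definition minimal_left_ideal_Oplus (S : R -> Prop)
    (L : ((R -> Prop) -> Prop) -> Prop) : Prop :=
  left_ideal_Oplus S L /\
  forall L', left_ideal_Oplus S L' -> (forall q, L' q -> L q) ->
             forall q, L q -> L' q.

Definition is_topology {X : Type} (open : (X -> Prop) -> Prop) : Prop :=
  open (fun _ => True) /\
  open (fun _ => False) /\
  (forall U V, open U -> open V -> open (fun x => U x /\ V x)) /\
  (forall C : (X -> Prop) -> Prop, (forall U, C U -> open U) ->
      open (fun x => exists U, C U /\ U x)).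

Definition hausdorff {X : Type} (open : (X -> Prop) -> Prop) : Prop :=
  forall x y, x <> y -> exists U V, open U /\ open V /\ U x /\ V y /\
    (forall z, U z -> V z -> False).

Definition compact {X : Type} (open : (X -> Prop) -> Prop) : Prop :=
  forall C : (X -> Prop) -> Prop, (forall U, C U -> open U) ->
    (forall x, exists U, C U /\ U x) ->
    exists l : list (X -> Prop), (forall U, In U l -> C U) /\
      (forall x, exists U, In U l /\ U x).

Definition continuous {X : Type} (open : (X -> Prop) -> Prop) (f : X -> X) : Prop :=
  forall U, open U -> open (fun x => U (f x)).

Definition neighbourhood {X : Type} (open : (X -> Prop) -> Prop) (W : X -> Prop) (x : X)
  : Prop := exists U, open U /\ U x /\ (forall z, U z -> W z).

Definition dynamical_system (S : R -> Prop) {X : Type} (open : (X -> Prop) -> Prop)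
    (T : R -> X -> X) : Prop :=
  is_topology open /\ hausdorff open /\ compact open /\
  (forall s, S s -> continuous open (T s)) /\
  (forall s t x, S s -> S t -> T s (T t x) = T (s + t) x).

Definition plim (S : R -> Prop) {X : Type} (open : (X -> Prop) -> Prop)
    (p : (R -> Prop) -> Prop) (f : R -> X) (y : X) : Prop :=
  forall W, neighbourhood open W y -> p (fun s => S s /\ W (f s)).

Definition Tp_eq (S : R -> Prop) {X : Type} (open : (X -> Prop) -> Prop)
    (T : R -> X -> X) (p : (R -> Prop) -> Prop) (x y : X) : Prop :=
  plim S open p (fun s => T s x) y.

Definition syndetic_near_zero (S : R -> Prop) (B : R -> Prop) : Prop :=
  forall eps, 0 < eps ->
    exists F : list R, F <> nil /\
      (forall t, In t F -> S t /\ 0 < t /\ t < eps) /\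
      exists delta, 0 < delta /\
        forall s, S s -> 0 < s -> s < delta ->
          exists t, In t F /\ shiftl S t B s.

Definition unif_recurrent_near_zero (S : R -> Prop) {X : Type}
    (open : (X -> Prop) -> Prop) (T : R -> X -> X) (x : X) : Prop :=
  forall W, neighbourhood open W x ->
    syndetic_near_zero S (fun s => S s /\ W (T s x)).

(* Main.v *)
Require Import Defs.
From Stdlib Require Import Reals List Classical FunctionalExtensionality PropExtensionality Lra.
From mathcomp Require boolp classical_sets.
Open Scope R_scope.

Lemma zorn_pre (T : Type) (t0 : T) (Rl : T -> T -> Prop) :
 (forall t, Rl t t) -> (forall r s t, Rl r s -> Rl s t -> Rl r t) ->
 (forall A : T -> Prop, (forall s t, A s -> A t -> Rl s t \/ Rl t s) -> exists t, forall s, A s -> Rl s t) ->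
 exists t, forall s, Rl t s -> Rl s t.
Proof.
intros Hr Ht Hc.
set (Rb := fun a b => boolp.asbool (Rl a b)).
assert (E : forall a b, Rb a b = true <-> Rl a b).
{ intros a b. unfold Rb. split; intro H.
  - apply (ssrbool.elimT (boolp.asboolP _)). exact H.
  - apply (ssrbool.introT (boolp.asboolP _)). exact H. }
destruct (@classical_sets.ZL_preorder T t0 Rb) as [t Ht0].
- intro t; apply E; auto.
- intros r s u H1 H2; apply E; apply E in H1; apply E in H2; eauto.
- intros A HA. destruct (Hc A) as [t Hta].
  + intros s u As Au. destruct (HA s u As Au) as [H|H]; [left|right]; apply E; exact H.
  + exists t. intros s As. apply E. auto.
- exists t. intros s H. apply E. apply Ht0. apply E. exact H.
Qed.

Lemma set_ext {U : Type} (A B : U -> Prop) : (forall x, A x <-> B x) -> A = B.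
Proof. intro H; apply functional_extensionality; intro x; apply propositional_extensionality; apply H. Qed.

Section UF.
Variable S : R -> Prop.

Definition filt (F : (R -> Prop) -> Prop) : Prop :=
  (forall A, F A -> forall x, A x -> S x) /\
  F S /\
  ~ F (fun _ => False) /\
  (forall A B, F A -> (forall x, A x -> B x) -> (forall x, B x -> S x) -> F B) /\
  (forall A B, F A -> F B -> F (fun x => A x /\ B x)).

Variable p : (R -> Prop) -> Prop.
Hypothesis Hp : ultrafilter S p.

Lemma uf_filt : filt p.
Proof. destruct Hp as (a&b&c&d&e&f). repeat split; auto. Qed.

Lemma uf_sub A x : p A -> A x -> S x.
Proof. destruct Hp as (a&_). eauto. Qed.
Lemma uf_S : p S.
Proof. destruct Hp as (_&a&_). auto. Qed.
Lemma uf_up A B : p A -> (forall x, S x -> A x -> B x) -> (forall x, B x -> S x) -> p B.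
Proof. destruct Hp as (a&_&_&d&_). intros HA H1 H2. apply (d A B HA); auto.
  intros x Ax. apply H1; auto. eapply a; eauto. Qed.
Lemma uf_inter A B : p A -> p B -> p (fun x => A x /\ B x).
Proof. destruct Hp as (_&_&_&_&e&_). auto. Qed.
Lemma uf_ne A : p A -> exists x, A x.
Proof. destruct Hp as (a&_&c&d&_). intro HA. apply NNPP; intro N. apply c.
  apply (d A); auto. intros x Ax; apply N; eauto. intros x [] . Qed.
Lemma uf_compl A : p (fun x => S x /\ A x) \/ p (fun x => S x /\ ~ A x).
Proof. destruct Hp as (_&_&_&_&_&f).
  destruct (f (fun x => S x /\ A x)) as [H|H]. intros x [? ?]; auto. left; auto.
  right. apply (uf_up _ _ H). intros x Sx [_ N]. split; auto.
  intros x [? ?]; auto. Qed.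
Lemma uf_not_both A : p A -> p (fun x => S x /\ ~ A x) -> False.
Proof. intros H1 H2. destruct (uf_ne _ (uf_inter _ _ H1 H2)) as [x [a [_ b]]]. auto. Qed.

Lemma uf_list {I : Type} (l : list I) (Bf : I -> R -> Prop) A :
  p A -> (forall x, A x -> exists t, In t l /\ Bf t x) -> (forall t x, Bf t x -> S x) ->
  exists t, In t l /\ p (Bf t).
Proof.
revert A. induction l as [|t l IH]; intros A HA Hc Hs.
- destruct (uf_ne _ HA) as [x Ax]. destruct (Hc x Ax) as [t [[] _]].
- destruct (uf_compl (Bf t)) as [H|H].
  + exists t. split. left; auto. apply (uf_up _ _ H). intros x _ [_ b]; auto. eauto.
  + destruct (IH (fun x => A x /\ (S x /\ ~ Bf t x))) as [t' [i b]].
    * apply uf_inter; auto.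
    * intros x [Ax [_ N]]. destruct (Hc x Ax) as [t' [[e|i] b]].
      subst; contradiction. eauto.
    * auto.
    * exists t'. split; auto. right; auto.
Qed.
End UF.

Lemma uf_eq S p q : ultrafilter S p -> ultrafilter S q -> (forall A, p A -> q A) -> p = q.
Proof.
intros Hp Hq H. apply set_ext. intro A. split; auto. intro HqA.
apply NNPP; intro N. destruct (uf_compl S p Hp A) as [H1|H1].
- apply N. apply (uf_up S p Hp _ _ H1). intros x _ [_ a]; auto. intros x Ax; eapply uf_sub; eauto.
- apply (uf_not_both S q Hq A HqA). auto.
Qed.


Lemma ultra_ext S F0 : filt S F0 -> exists p, ultrafilter S p /\ forall A, F0 A -> p A.
Proof.
intro HF0.
set (T := {F : (R -> Prop) -> Prop | filt S F /\ forall A, F0 A -> F A}).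
assert (t0F : filt S F0 /\ forall A, F0 A -> F0 A) by auto.
set (t0 := exist _ F0 t0F : T).
set (Rl := fun (a b : T) => forall B, proj1_sig a B -> proj1_sig b B).
destruct (zorn_pre T t0 Rl) as [M HM].
- intros t B; auto.
- intros r s t H1 H2 B H; auto.
- intros Ch Htot.
  destruct (classic (exists c, Ch c)) as [[c Hc]|N].
  2:{ exists t0. intros s Hs. exfalso; eauto. }
  set (U := fun B => exists F : T, Ch F /\ proj1_sig F B).
  assert (HU : filt S U /\ forall A, F0 A -> U A).
  { split.
    - repeat split.
      + intros B [F [_ HB]] x Bx. destruct (proj2_sig F) as [[a _] _]. eauto.
      + exists c. split; auto. destruct (proj2_sig c) as [[_ [a _]] _]. auto.
      + intros [F [_ HB]]. destruct (proj2_sig F) as [[_ [_ [a _]]] _]. auto.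
      + intros A B [F [HF HA]] H1 H2. exists F; split; auto.
        destruct (proj2_sig F) as [[_ [_ [_ [a _]]]] _]. eauto.
      + intros A B [F1 [H1 HA]] [F2 [H2 HB]].
        destruct (Htot F1 F2 H1 H2) as [E|E].
        * exists F2. split; auto. destruct (proj2_sig F2) as [[_ [_ [_ [_ a]]]] _]. auto.
        * exists F1. split; auto. destruct (proj2_sig F1) as [[_ [_ [_ [_ a]]]] _]. auto.
    - intros A HA. exists c. split; auto. destruct (proj2_sig c) as [_ a]. auto. }
  exists (exist _ U HU). intros s Hs B HB. simpl. exists s; auto.
- destruct M as [Mf [HMf HF0M]]. simpl in *.
  exists Mf. split; auto.
  destruct HMf as (a&b&c&d&e).
  repeat split; auto.
  intros A HAS. apply NNPP; intro N.
  assert (N1 : ~ Mf A) by tauto.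
  assert (N2 : ~ Mf (fun x => S x /\ ~ A x)) by tauto.
  set (G := fun B => (forall x, B x -> S x) /\ exists C, Mf C /\ forall x, C x -> A x -> B x).
  assert (HG : filt S G /\ forall A, F0 A -> G A).
  { split.
    - split; [|split; [|split; [|split]]].
      + intros B [H _]; auto.
      + split. auto. exists S. split; auto.
      + intros [_ [C [HC HCA]]]. apply N2. apply (d C); auto.
        intros x Cx. split. eauto. intro Ax. apply (HCA x Cx Ax).
        intros x [? ?]; auto.
      + intros A1 B1 [_ [C [HC HCA]]] H1 H2. split; auto. exists C; split; auto.
      + intros A1 B1 [G1 [C1 [H1 HC1]]] [_ [C2 [H2 HC2]]]. split.
        intros x [? ?]; eauto. exists (fun x => C1 x /\ C2 x). split; auto.
        intros x [? ?] ?; split; auto.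
    - intros A0 HA0. split. eauto. exists A0. split; auto. }
  assert (HMG : Rl (exist _ Mf (conj (conj a (conj b (conj c (conj d e)))) HF0M)) (exist _ G HG)).
  { intros B HB. simpl in *. split. eauto. exists B; split; auto. }
  apply HM in HMG. apply N1. apply HMG. simpl. split; auto. exists S; split; auto.
Qed.


Section BP.
Variable S : R -> Prop.
Hypothesis HS : dense_subsemigroup S.

Lemma S_pos s : S s -> 0 < s.
Proof. destruct HS as [a _]. auto. Qed.
Lemma S_add s t : S s -> S t -> S (s + t).
Proof. destruct HS as [_ [a _]]. auto. Qed.
Lemma S_dense a b : 0 < a -> a < b -> exists s, S s /\ a < s < b.
Proof. destruct HS as [_ [_ a']]. auto. Qed.

Lemma bplus_uf p q : ultrafilter S p -> ultrafilter S q -> ultrafilter S (bplus S p q).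
Proof.
intros Hp Hq. unfold bplus.
split; [|split; [|split; [|split; [|split]]]].
- intros A [H _]; auto.
- split. auto. apply (uf_up S p Hp S); [apply uf_S; auto| |].
  + intros x Sx _. split; auto. apply (uf_up S q Hq S); [apply uf_S; auto| |].
    * intros y Sy _. split; auto. apply S_add; auto.
    * intros y [? ?]; auto.
  + intros x [? ?]; auto.
- intros [_ H]. destruct (uf_ne S p Hp _ H) as [x [_ Hx]].
  destruct (uf_ne S q Hq _ Hx) as [y [_ []]].
- intros A B [HA H] H1 H2. split; auto. apply (uf_up S p Hp _ _ H).
  + intros x Sx [_ Hx]. split; auto. apply (uf_up S q Hq _ _ Hx).
    * intros y Sy [? ?]. split; auto.
    * intros y [? ?]; auto.
  + intros x [? ?]; auto.
- intros A B [HA H1] [HB H2]. split. intros x [? ?]; auto.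
  apply (uf_up S p Hp _ _ (uf_inter S p Hp _ _ H1 H2)).
  + intros x Sx [[_ a] [_ b]]. split; auto.
    apply (uf_up S q Hq _ _ (uf_inter S q Hq _ _ a b)).
    * intros y Sy [[_ c] [_ d]]. split; auto.
    * intros y [? ?]; auto.
  + intros x [? ?]; auto.
- intros A HA.
  destruct (uf_compl S p Hp (fun x => q (shiftl S x A))) as [H|H].
  + left. split; auto.
  + right. split. intros x [? ?]; auto.
    apply (uf_up S p Hp _ _ H).
    * intros x Sx [_ N]. split; auto.
      destruct (uf_compl S q Hq (shiftl S x A)) as [H'|H'].
      -- exfalso. apply N. apply (uf_up S q Hq _ _ H'). intros y _ [_ b]; auto.
         intros y [? ?]; auto.
      -- apply (uf_up S q Hq _ _ H'). intros y Sy [_ b]. split; auto. split.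
         apply S_add; auto. intro Ay. apply b. split; auto.
         intros y [? ?]; auto.
    * intros x [? ?]; auto.
Qed.

Lemma bplus_assoc p q r : ultrafilter S p -> ultrafilter S q -> ultrafilter S r ->
  bplus S (bplus S p q) r = bplus S p (bplus S q r).
Proof.
intros Hp Hq Hr.
apply uf_eq with S.
- apply bplus_uf; auto. apply bplus_uf; auto.
- apply bplus_uf; auto. apply bplus_uf; auto.
- intros A [HA [_ H]]. split; auto.
  apply (uf_up S p Hp _ _ H).
  + intros y Sy [_ H1]. split; auto. split. intros z [? ?]; auto.
    apply (uf_up S q Hq _ _ H1).
    * intros z Sz [_ [_ H2]]. split; auto.
      apply (uf_up S r Hr _ _ H2).
      -- intros w Sw [_ H3]. split; auto. split. apply S_add; auto.
         rewrite <- Rplus_assoc. auto.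
      -- intros w [? ?]; auto.
    * intros z [? ?]; auto.
  + intros y [? ?]; auto.
Qed.

Lemma Oplus_plus p q : Oplus S p -> Oplus S q -> Oplus S (bplus S p q).
Proof.
intros [Hp Hp0] [Hq Hq0]. split. apply bplus_uf; auto.
intros eps He. split. intros z [? ?]; auto.
apply (uf_up S p Hp _ _ (Hp0 (eps/2) ltac:(lra))).
- intros x Sx [_ [x0 x1]]. split; auto.
  apply (uf_up S q Hq _ _ (Hq0 (eps/2) ltac:(lra))).
  + intros y Sy [_ [y0 y1]]. split; auto. split. apply S_add; auto. lra.
  + intros y [? ?]; auto.
- intros x [? ?]; auto.
Qed.

Lemma Oplus_uf p : Oplus S p -> ultrafilter S p.
Proof. intros [a _]; auto. Qed.

Lemma Oplus_exists : exists p, Oplus S p.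
Proof.
set (F := fun A => (forall x, A x -> S x) /\ exists eps, 0 < eps /\ forall x, S x -> 0 < x -> x < eps -> A x).
destruct (ultra_ext S F) as [p [Hp HF]].
- split; [|split; [|split; [|split]]].
  + intros A [H _]; auto.
  + split. auto. exists 1. split. lra. auto.
  + intros [_ [eps [He H]]]. destruct (S_dense (eps/2) eps) as [s [Ss [s1 s2]]]; try lra.
    apply (H s); auto; lra.
  + intros A B [_ [e [He H]]] H1 H2. split; auto. exists e; split; auto.
  + intros A B [HA [e1 [He1 H1]]] [_ [e2 [He2 H2]]]. split. intros x [? ?]; auto.
    exists (Rmin e1 e2). split. apply Rmin_pos; auto.
    intros x Sx x0 x1. split. apply H1; auto. eapply Rlt_le_trans; eauto. apply Rmin_l.
    apply H2; auto. eapply Rlt_le_trans; eauto. apply Rmin_r.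
- exists p. split; auto. intros eps He. apply HF. split. intros x [? ?]; auto.
  exists eps. split; auto.
Qed.

End BP.


Section LIM.
Variable S : R -> Prop.
Hypothesis HS : dense_subsemigroup S.
Variable X : Type.
Variable open : (X -> Prop) -> Prop.
Variable T : R -> X -> X.
Hypothesis HD : dynamical_system S open T.

Lemma D_top : is_topology open. Proof. destruct HD as [a _]; auto. Qed.
Lemma D_haus : hausdorff open. Proof. destruct HD as [_ [a _]]; auto. Qed.
Lemma D_comp : Defs.compact open. Proof. destruct HD as [_ [_ [a _]]]; auto. Qed.
Lemma D_cont s : S s -> Defs.continuous open (T s). Proof. destruct HD as [_ [_ [_ [a _]]]]; auto. Qed.
Lemma D_act s t x : S s -> S t -> T s (T t x) = T (s + t) x.
Proof. destruct HD as [_ [_ [_ [_ a]]]]; auto. Qed.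
Lemma open_inter U V : open U -> open V -> open (fun x => U x /\ V x).
Proof. destruct D_top as [_ [_ [a _]]]; auto. Qed.

Lemma nbhd_open U y : open U -> U y -> Defs.neighbourhood open U y.
Proof. intros; exists U; auto. Qed.

Lemma plim_exists p f : ultrafilter S p -> exists y, plim S open p f y.
Proof.
intro Hp. apply NNPP; intro N.
set (C := fun U => open U /\ ~ p (fun s => S s /\ U (f s))).
destruct (D_comp C) as [l [Hl Hcov]].
- intros U [? _]; auto.
- intro y. apply NNPP; intro N2. apply N. exists y. intros W [U [HU [Uy UW]]].
  apply NNPP; intro N3. apply N2. exists U. split; auto. split; auto.
  intro HpU. apply N3. apply (uf_up S p Hp _ _ HpU). intros s _ [? ?]; auto.
  intros s [? ?]; auto.
- assert (H : p (fun s => S s /\ forall U, In U l -> ~ U (f s))).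
  { clear Hcov. induction l as [|U l IH].
    - apply (uf_up S p Hp _ _ (uf_S S p Hp)). intros s Ss _. split; [auto|intros U0 []].
      intros s [? ?]; auto.
    - assert (IH' := IH (fun V H => Hl V (or_intror H))).
      destruct (Hl U (or_introl eq_refl)) as [_ NU].
      destruct (uf_compl S p Hp (fun s => U (f s))) as [H|H].
      + contradiction.
      + apply (uf_up S p Hp _ _ (uf_inter S p Hp _ _ H IH')).
        intros s Ss [[_ a] [_ b]]. split; auto. intros V [e|i]. subst; auto. auto.
        intros s [? ?]; auto. }
  destruct (uf_ne S p Hp _ H) as [s [_ Hs]].
  destruct (Hcov (f s)) as [U [i Us]]. apply (Hs U i Us).
Qed.

Lemma plim_unique p f y1 y2 : ultrafilter S p -> plim S open p f y1 -> plim S open p f y2 -> y1 = y2.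
Proof.
intros Hp H1 H2. apply NNPP; intro N.
destruct (D_haus y1 y2 N) as [U [V [HU [HV [Uy [Vy D]]]]]].
assert (a := H1 U (nbhd_open U y1 HU Uy)).
assert (b := H2 V (nbhd_open V y2 HV Vy)).
destruct (uf_ne S p Hp _ (uf_inter S p Hp _ _ a b)) as [s [[_ c] [_ d]]].
eauto.
Qed.

Lemma Tp_comp p q x y z : ultrafilter S p -> ultrafilter S q ->
  Tp_eq S open T q x y -> Tp_eq S open T p y z -> Tp_eq S open T (bplus S p q) x z.
Proof.
intros Hp Hq Hqy Hpz W [U [HU [Uz UW]]].
split. intros s [? ?]; auto.
assert (H := Hpz U (nbhd_open U z HU Uz)).
apply (uf_up S p Hp _ _ H).
- intros s Ss [_ Us]. split; auto.
  assert (H2 := Hqy _ (nbhd_open _ y (D_cont s Ss U HU) Us)).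
  apply (uf_up S q Hq _ _ H2).
  + intros t St [_ b]. split; auto. split. apply S_add; auto.
    apply UW. rewrite <- D_act; auto.
  + intros t [? ?]; auto.
- intros s [? ?]; auto.
Qed.

End LIM.


Definition closedK (S : R -> Prop) (K : ((R -> Prop) -> Prop) -> Prop) : Prop :=
  forall p, ultrafilter S p -> (forall A, p A -> exists q, K q /\ q A) -> K p.

Lemma uf_compl2 S q A : ultrafilter S q -> (forall x, A x -> S x) -> ~ q A -> q (fun x => S x /\ ~ A x).
Proof.
intros Hq HA N. destruct (uf_compl S q Hq A) as [H|H]; auto.
exfalso; apply N. apply (uf_up S q Hq _ _ H). intros x _ [_ a]; auto. auto.
Qed.

Lemma chain_inter S (Ch : (((R -> Prop) -> Prop) -> Prop) -> Prop) :
 (forall K1 K2, Ch K1 -> Ch K2 -> (forall q, K1 q -> K2 q) \/ (forall q, K2 q -> K1 q)) ->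
 (exists K, Ch K) ->
 (forall K, Ch K -> (forall q, K q -> ultrafilter S q) /\ (exists q, K q) /\ closedK S K) ->
 exists p, forall K, Ch K -> K p.
Proof.
intros Htot [K0 HK0] HCh.
set (F := fun A => (forall x, A x -> S x) /\ exists K, Ch K /\ forall q, K q -> q A).
destruct (ultra_ext S F) as [p [Hp HF]].
- split; [|split; [|split; [|split]]].
  + intros A [H _]; auto.
  + split. auto. exists K0. split; auto. intros q Kq. destruct (HCh K0 HK0) as [a _].
    apply uf_S; auto.
  + intros [_ [K [HK H]]]. destruct (HCh K HK) as [a [[q Kq] _]].
    destruct (uf_ne S q (a q Kq) _ (H q Kq)) as [_ []].
  + intros A B [_ [K [HK H]]] H1 H2. split; auto. exists K. split; auto.
    intros q Kq. destruct (HCh K HK) as [a _]. apply (uf_up S q (a q Kq) _ _ (H q Kq)); auto.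
  + intros A B [HA [K1 [HK1 H1]]] [HB [K2 [HK2 H2]]]. split. intros x [? ?]; auto.
    destruct (Htot K1 K2 HK1 HK2) as [E|E].
    * exists K1. split; auto. intros q Kq. destruct (HCh K1 HK1) as [a _].
      apply (uf_inter S q (a q Kq)); [apply H1 | apply H2; apply E]; exact Kq.
    * exists K2. split; auto. intros q Kq. destruct (HCh K2 HK2) as [a _].
      apply (uf_inter S q (a q Kq)); [apply H1; apply E | apply H2]; exact Kq.
- exists p. intros K HK. destruct (HCh K HK) as [a [_ c]]. apply c; auto.
  intros A HpA. apply NNPP; intro N.
  assert (HAS : forall x, A x -> S x) by (intros; eapply uf_sub; eauto).
  apply (uf_not_both S p Hp A HpA). apply HF. split. intros x [? ?]; auto.
  exists K. split; auto. intros q Kq. apply uf_compl2; auto. intro qA. apply N; eauto.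
Qed.

Section CL.
Variable S : R -> Prop.
Hypothesis HS : dense_subsemigroup S.

Lemma image_closed K e : (forall q, K q -> ultrafilter S q) -> closedK S K -> ultrafilter S e ->
  closedK S (fun p => exists r, K r /\ p = bplus S r e).
Proof.
intros HKu HK He p Hp Hcl.
set (F := fun D => (forall x, D x -> S x) /\ exists A, p A /\ exists Dk, (forall q, K q -> q Dk) /\
     forall x, S x -> Dk x -> e (shiftl S x A) -> D x).
destruct (ultra_ext S F) as [r [Hr HF]].
- split; [|split; [|split; [|split]]].
  + intros A [H _]; auto.
  + split. auto. exists S. split. apply uf_S; auto. exists S. split; auto.
    intros q Kq. apply uf_S; auto.
  + intros [_ [A [HA [Dk [HDk H]]]]].
    destruct (Hcl A HA) as [q [[r [Kr E]] qA]]. subst q.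
    destruct qA as [_ qA].
    destruct (uf_ne S r (HKu r Kr) _ (uf_inter S r (HKu r Kr) _ _ qA (HDk r Kr))) as [x [[Sx ex] Dx]].
    exact (H x Sx Dx ex).
  + intros A B [_ [A0 [HA0 [Dk [HDk H]]]]] H1 H2. split; auto. exists A0. split; auto.
    exists Dk. split; auto.
  + intros A B [HA [A1 [HA1 [D1 [HD1 H1]]]]] [HB [A2 [HA2 [D2 [HD2 H2]]]]].
    split. intros x [? ?]; auto.
    exists (fun x => A1 x /\ A2 x). split. apply (uf_inter S p Hp); auto.
    exists (fun x => D1 x /\ D2 x). split. intros q Kq. apply (uf_inter S q (HKu q Kq)); [apply HD1|apply HD2]; exact Kq.
    intros x Sx [d1 d2] ex. split.
    * apply H1; auto. apply (uf_up S e He _ _ ex). intros y _ [Sy [a _]]; split; auto.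
      intros y [? ?]; auto.
    * apply H2; auto. apply (uf_up S e He _ _ ex). intros y _ [Sy [_ a]]; split; auto.
      intros y [? ?]; auto.
- exists r. split.
  + apply HK; auto. intros D HD. apply NNPP; intro N.
    assert (HDS : forall x, D x -> S x) by (intros; eapply uf_sub; eauto).
    apply (uf_not_both S r Hr D HD). apply HF. split. intros x [? ?]; auto.
    exists S. split. apply uf_S; auto. exists (fun x => S x /\ ~ D x). split.
    * intros q Kq. apply uf_compl2; auto. intro qD. apply N. eauto.
    * auto.
  + apply uf_eq with S. auto. apply bplus_uf; auto.
    intros A HA. split. intros z Hz; exact (uf_sub S p Hp A z HA Hz).
    apply HF. split. intros x [? ?]; auto. exists A. split; auto. exists S. split.
    intros q Kq; apply uf_S; auto. auto.
Qed.

Lemma fix_closed e : ultrafilter S e ->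
  closedK S (fun q => ultrafilter S q /\ bplus S q e = e).
Proof.
intros He p Hp Hcl. split; auto.
symmetry. apply (uf_eq S e (bplus S p e) He (bplus_uf S HS p e Hp He)).
intros A HA. apply NNPP; intro N.
assert (HAS : forall x, A x -> S x) by exact (fun x => uf_sub S e He A x HA).
assert (H := uf_compl2 S _ _ (bplus_uf S HS p e Hp He) HAS N).
destruct H as [_ H].
destruct (Hcl _ H) as [q [[Hq E] qD]].
assert (H2 : bplus S q e (fun x => S x /\ ~ A x)). { split. intros x [? ?]; auto. auto. }
rewrite E in H2. exact (uf_not_both S e He A HA H2).
Qed.

Lemma inter_closed K1 K2 : closedK S K1 -> closedK S K2 -> closedK S (fun q => K1 q /\ K2 q).
Proof.
intros H1 H2 p Hp Hcl. split.
- apply H1; auto. intros A HA. destruct (Hcl A HA) as [q [[a b] c]]. eauto.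
- apply H2; auto. intros A HA. destruct (Hcl A HA) as [q [[a b] c]]. eauto.
Qed.

Lemma Oplus_closed : closedK S (Oplus S).
Proof.
intros p Hp Hcl. split; auto. intros eps He. apply NNPP; intro N.
assert (H := uf_compl2 S _ _ Hp (fun x (h : S x /\ 0 < x /\ x < eps) => proj1 h) N).
destruct (Hcl _ H) as [q [[Hq Hq0] qD]].
exact (uf_not_both S q Hq _ (Hq0 eps He) qD).
Qed.

Lemma ellis (M : ((R -> Prop) -> Prop) -> Prop) :
  (exists q, M q) -> (forall q, M q -> ultrafilter S q) -> closedK S M ->
  (forall v w, M v -> M w -> M (bplus S v w)) ->
  exists e, M e /\ bplus S e e = e.
Proof.
intros HMne HMu HMc HMs.
set (good := fun K : ((R -> Prop) -> Prop) -> Prop => (forall q, K q -> M q) /\ (exists q, K q) /\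
   closedK S K /\ (forall v w, K v -> K w -> K (bplus S v w))).
set (Ty := {K | good K}).
assert (g0 : good M). { split; auto. }
set (t0 := exist _ M g0 : Ty).
set (Rl := fun a b : Ty => forall q, proj1_sig b q -> proj1_sig a q).
destruct (zorn_pre Ty t0 Rl) as [[A gA] HA].
- intros t q; auto.
- intros r s t H1 H2 q H; auto.
- intros Ch Htot.
  destruct (classic (exists c, Ch c)) as [[c Hc]|N].
  2:{ exists t0. intros s Hs. exfalso; eauto. }
  set (I := fun q => forall K : Ty, Ch K -> proj1_sig K q).
  assert (gI : good I).
  { split; [|split; [|split]].
    - intros q Iq. destruct (proj2_sig c) as [a _]. apply a. apply Iq; auto.
    - destruct (chain_inter S (fun K => exists k : Ty, Ch k /\ K = proj1_sig k)) as [p Hp].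
      + intros K1 K2 [k1 [c1 e1]] [k2 [c2 e2]]. subst.
        destruct (Htot k1 k2 c1 c2) as [E|E]; [right|left]; auto.
      + exists (proj1_sig c). eauto.
      + intros K [k [ck ek]]. subst. destruct (proj2_sig k) as [a [b [cc _]]].
        split; [intros q kq; apply HMu; auto| split; auto].
      + exists p. intros K HK. apply Hp. eauto.
    - intros p Hp Hcl K HK. destruct (proj2_sig K) as [_ [_ [cc _]]]. apply cc; auto.
      intros A HA. destruct (Hcl A HA) as [q [Iq qA]]. exists q; split; auto.
    - intros v w Iv Iw K HK. destruct (proj2_sig K) as [_ [_ [_ d]]]. auto. }
  exists (exist _ I gI). intros s Hs q Iq. apply Iq; auto.
- destruct gA as [AM [[e Ae] [Acl As]]].
  assert (Au : forall q, A q -> ultrafilter S q) by auto.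
  set (Ae' := fun p => exists r, A r /\ p = bplus S r e).
  assert (gAe : good Ae').
  { split; [|split; [|split]].
    - intros q [r [Ar E]]. subst. auto.
    - exists (bplus S e e). exists e. auto.
    - apply image_closed; auto.
    - intros v w [r1 [A1 E1]] [r2 [A2 E2]]. subst.
      exists (bplus S (bplus S r1 e) r2). split. auto.
      rewrite (bplus_assoc S HS (bplus S r1 e) r2 e); [reflexivity | apply bplus_uf; auto | auto | auto]. }
  assert (H1 := HA (exist _ Ae' gAe)).
  assert (H1' : forall q, A q -> Ae' q).
  { apply H1. intros q [r [Ar E]]. simpl. subst. auto. }
  destruct (H1' e Ae) as [r [Ar Er]].
  set (B := fun q => A q /\ (ultrafilter S q /\ bplus S q e = e)).
  assert (gB : good B).
  { split; [|split; [|split]].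
    - intros q [Aq _]; auto.
    - exists r. split; [exact Ar| split; [auto | symmetry; exact Er]].
    - unfold B. exact (inter_closed A _ Acl (fix_closed e (Au e Ae))).
    - intros v w [Av [uv ev]] [Aw [uw ew]]. split; auto. split. apply bplus_uf; auto.
      rewrite (bplus_assoc S HS v w e); auto. rewrite ew; auto. }
  assert (H2 := HA (exist _ B gB)).
  assert (H2' : forall q, A q -> B q).
  { apply H2. intros q [Aq _]. simpl. auto. }
  destruct (H2' e Ae) as [_ [_ E]]. exists e. split; auto.
Qed.

End CL.


Section MAIN.
Variable S : R -> Prop.
Hypothesis HS : dense_subsemigroup S.
Variable X : Type.
Variable open : (X -> Prop) -> Prop.
Variable T : R -> X -> X.
Hypothesis HD : dynamical_system S open T.
Variable L : ((R -> Prop) -> Prop) -> Prop.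
Hypothesis HL : minimal_left_ideal_Oplus S L.

Lemma L_ne : exists q, L q. Proof. destruct HL as [[a _] _]; auto. Qed.
Lemma L_O q : L q -> Oplus S q. Proof. destruct HL as [[_ [a _]] _]; auto. Qed.
Lemma L_uf q : L q -> ultrafilter S q. Proof. intro H. apply Oplus_uf, L_O; auto. Qed.
Lemma L_id p q : Oplus S p -> L q -> L (bplus S p q). Proof. destruct HL as [[_ [_ a]] _]; auto. Qed.

Lemma L_eq v : L v -> forall u, L u -> exists q, Oplus S q /\ u = bplus S q v.
Proof.
intros Lv. destruct HL as [_ Hmin].
apply (Hmin (fun w => exists r, Oplus S r /\ w = bplus S r v)).
- split; [|split].
  + destruct (Oplus_exists S HS) as [r Hr]. eauto.
  + intros q [r [Hr E]]. subst. apply Oplus_plus; auto. apply L_O; auto.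
  + intros p q Hp [r [Hr E]]. subst. exists (bplus S p r). split.
    apply Oplus_plus; auto. symmetry. apply bplus_assoc; auto.
    apply Oplus_uf; auto. apply Oplus_uf; auto. apply L_uf; auto.
- intros q [r [Hr E]]. subst. apply L_id; auto.
Qed.

Lemma L_closed : closedK S L.
Proof.
destruct L_ne as [v Lv].
assert (Hc := image_closed S HS (Oplus S) v (Oplus_uf S) (Oplus_closed S) (L_uf v Lv)).
intros p Hp Hcl.
assert (H : exists r, Oplus S r /\ p = bplus S r v).
{ apply Hc; auto. intros A HA. destruct (Hcl A HA) as [q [Lq qA]].
  exists q. split; auto. apply L_eq; auto. }
destruct H as [r [Hr E]]. subst. apply L_id; auto.
Qed.

Lemma fixT_closed x : closedK S (fun v => ultrafilter S v /\ Tp_eq S open T v x x).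
Proof.
intros p Hp Hcl. split; auto. intros W [U [HU [Ux UW]]]. apply NNPP; intro N.
assert (N' : ~ p (fun s => S s /\ U (T s x))).
{ intro H. apply N. apply (uf_up S p Hp _ _ H). intros s _ [? ?]; auto. intros s [? ?]; auto. }
assert (H := uf_compl2 S p _ Hp (fun s h => proj1 h) N').
destruct (Hcl _ H) as [q [[Hqu Hq] qD]].
assert (H2 := Hq U (nbhd_open X open U x HU Ux)).
destruct (uf_ne S q Hqu _ (uf_inter S q Hqu _ _ H2 qD)) as [s [[Ss a] [_ b]]].
apply b; split; auto.
Qed.

Lemma nbhd_True y : Defs.neighbourhood open (fun _ => True) y.
Proof. exists (fun _ => True). split; auto. destruct (D_top S X open T HD) as [a _]. auto. Qed.

Lemma nbhd_inter W1 W2 y : Defs.neighbourhood open W1 y -> Defs.neighbourhood open W2 y ->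
  Defs.neighbourhood open (fun z => W1 z /\ W2 z) y.
Proof.
intros [U1 [H1 [a1 b1]]] [U2 [H2 [a2 b2]]]. exists (fun z => U1 z /\ U2 z).
split. apply (open_inter S X open T HD); auto. split; auto. intros z [? ?]; auto.
Qed.

Lemma a_to_b x : unif_recurrent_near_zero S open T x -> exists u, L u /\ Tp_eq S open T u x x.
Proof.
intro Ha. destruct L_ne as [v Lv]. assert (Hv := L_O v Lv). destruct Hv as [Hvu Hv0].
set (B := fun (W : X -> Prop) => fun s => S s /\ W (T s x)).
set (F := fun A => (forall t, A t -> S t) /\ exists eps, 0 < eps /\ exists W, Defs.neighbourhood open W x /\
   forall t, S t -> 0 < t -> t < eps -> v (shiftl S t (B W)) -> A t).
destruct (ultra_ext S F) as [q [Hq HF]].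
- split; [|split; [|split; [|split]]].
  + intros A [H _]; auto.
  + split. auto. exists 1. split. lra. exists (fun _ => True). split. apply nbhd_True. auto.
  + intros [_ [eps [He [W [HW H]]]]].
    destruct (Ha W HW eps He) as [Fl [Fne [HFl [delta [Hd Hcov]]]]].
    destruct (uf_list S v Hvu Fl (fun t => shiftl S t (B W)) _ (Hv0 delta Hd)) as [t [It Ht]].
    * intros s [Ss [s0 s1]]. apply Hcov; auto.
    * intros t s [? ?]; auto.
    * destruct (HFl t It) as [St [t0 t1]]. exact (H t St t0 t1 Ht).
  + intros A A' [_ [e [He [W [HW H]]]]] H1 H2. split; auto. exists e. split; auto. exists W. split; auto.
  + intros A A' [HA [e1 [He1 [W1 [HW1 H1]]]]] [_ [e2 [He2 [W2 [HW2 H2]]]]].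
    split. intros t [? ?]; auto. exists (Rmin e1 e2). split. apply Rmin_pos; auto.
    exists (fun y => W1 y /\ W2 y). split. apply nbhd_inter; auto.
    intros t St t0 t1 Ht. assert (t1a : t < e1) by (eapply Rlt_le_trans; [exact t1| apply Rmin_l]).
    assert (t1b : t < e2) by (eapply Rlt_le_trans; [exact t1| apply Rmin_r]).
    split.
    * apply H1; auto. apply (uf_up S v Hvu _ _ Ht).
      intros s Ss [S1 [S2 [w1 w2]]]. split; auto. split; auto.
      intros s [? ?]; auto.
    * apply H2; auto. apply (uf_up S v Hvu _ _ Ht).
      intros s Ss [S1 [S2 [w1 w2]]]. split; auto. split; auto.
      intros s [? ?]; auto.
- exists (bplus S q v). split.
  + apply L_id; auto. split; auto. intros eps He. apply HF. split. intros t [? ?]; auto.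
    exists eps. split; auto. exists (fun _ => True). split. apply nbhd_True.
    intros t St t0 t1 _. auto.
  + intros W HW. split. intros s [? ?]; auto. apply HF. split. intros t [? ?]; auto.
    exists 1. split. lra. exists W. split; [exact HW | intros t St _ _ Ht; split; auto].
Qed.


Lemma b_to_a x : (exists u, L u /\ Tp_eq S open T u x x) -> unif_recurrent_near_zero S open T x.
Proof.
intros [u [Lu Hux]] W HW eps He. apply NNPP; intro N.
set (B := fun s => S s /\ W (T s x)).
destruct (S_dense S HS (eps/2) eps) as [t0 [St0 [t00 t01]]]; try lra.
set (G := fun A => (forall s, A s -> S s) /\ exists delta, 0 < delta /\ exists l : list R,
    (forall t, In t l -> S t /\ 0 < t /\ t < eps) /\
    forall s, S s -> 0 < s -> s < delta -> (forall t, In t l -> ~ shiftl S t B s) -> A s).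
destruct (ultra_ext S G) as [p [Hp HG]].
- split; [|split; [|split; [|split]]].
  + intros A [H _]; auto.
  + split. auto. exists 1. split. lra. exists nil. split. intros t []. auto.
  + intros [_ [delta [Hd [l [Hl H]]]]]. apply N.
    exists (t0 :: l). split. discriminate. split.
    * intros t [e|i]. subst; split; auto; lra. auto.
    * exists delta. split; auto. intros s Ss s0 s1. apply NNPP; intro N2.
      apply (H s Ss s0 s1). intros t It Hts. apply N2. exists t. split; auto. right; auto.
  + intros A A' [_ [d [Hd [l [Hl H]]]]] H1 H2. split; auto. exists d. split; auto. exists l. split; auto.
  + intros A A' [HA [d1 [Hd1 [l1 [Hl1 H1]]]]] [_ [d2 [Hd2 [l2 [Hl2 H2]]]]].
    split. intros s [? ?]; auto. exists (Rmin d1 d2). split. apply Rmin_pos; auto.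
    exists (l1 ++ l2). split.
    * intros t It. apply in_app_iff in It. destruct It; auto.
    * intros s Ss s0 s1 Hn. split.
      -- apply H1; auto. eapply Rlt_le_trans; [exact s1| apply Rmin_l]. intros t It; apply Hn; apply in_app_iff; auto.
      -- apply H2; auto. eapply Rlt_le_trans; [exact s1| apply Rmin_r]. intros t It; apply Hn; apply in_app_iff; auto.
- assert (HpO : Oplus S p).
  { split; auto. intros e' He'. apply HG. split. intros s [? ?]; auto. exists e'. split; auto.
    exists nil. split. intros t []. intros s Ss s0 s1 _. auto. }
  assert (Hnot : forall t, S t -> 0 < t -> t < eps -> ~ p (shiftl S t B)).
  { intros t St t0' t1' Hpt. apply (uf_not_both S p Hp (shiftl S t B) Hpt).
    apply HG. split. intros s [? ?]; auto. exists 1. split. lra. exists (t :: nil). split.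
    intros t' [e|[]]. subst; auto.
    intros s Ss _ _ Hn. split; auto. apply Hn. left; auto. }
  assert (Luu := L_uf u Lu).
  set (v := bplus S p u).
  assert (Lv : L v) by (apply L_id; auto).
  destruct (L_eq v Lv u Lu) as [q [Hq Eu]].
  destruct (plim_exists S X open T HD p (fun s => T s x) Hp) as [z Hz].
  assert (Hvz : Tp_eq S open T v x z) by exact (Tp_comp S HS X open T HD p u x x z Hp Luu Hux Hz).
  assert (Hqu := Oplus_uf S q Hq).
  destruct (plim_exists S X open T HD q (fun s => T s z) Hqu) as [z' Hz'].
  assert (Hq' : Tp_eq S open T (bplus S q v) x z').
  { exact (Tp_comp S HS X open T HD q v x z z' Hqu (L_uf v Lv) Hvz Hz'). }
  rewrite <- Eu in Hq'.
  assert (E := plim_unique S X open T HD u _ _ _ Luu Hux Hq'). subst z'.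
  destruct HW as [U [HU [Ux UW]]].
  assert (H1 := Hz' U (nbhd_open X open U x HU Ux)).
  destruct Hq as [_ Hq0].
  destruct (uf_ne S q Hqu _ (uf_inter S q Hqu _ _ H1 (Hq0 eps He))) as [t [[St Ut] [_ [t0' t1']]]].
  apply (Hnot t St t0' t1').
  assert (H2 := Hz _ (nbhd_open X open _ z (D_cont S X open T HD t St U HU) Ut)).
  apply (uf_up S p Hp _ _ H2).
  + intros s Ss [_ a]. split; auto. split. apply (S_add S HS); auto. apply UW.
    rewrite <- (D_act S X open T HD); auto.
  + intros s [? ?]; auto.
Qed.

Lemma b_to_d x : (exists u, L u /\ Tp_eq S open T u x x) ->
  exists u, L u /\ idempotent S u /\ Tp_eq S open T u x x.
Proof.
intros [u [Lu Hux]].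
destruct (ellis S HS (fun v => L v /\ (ultrafilter S v /\ Tp_eq S open T v x x))) as [e [[Le [_ He]] Ee]].
- exists u. split; auto. split; auto. apply L_uf; auto.
- intros q [Lq _]. apply L_uf; auto.
- exact (inter_closed S L _ L_closed (fixT_closed x)).
- intros v w [Lv [uv Hv]] [Lw [uw Hw]]. split. apply L_id; auto. apply L_O; auto.
  split. apply bplus_uf; auto. exact (Tp_comp S HS X open T HD v w x x x uv uw Hw Hv).
- exists e. split; auto.
Qed.

Lemma c_to_d x : (exists (y : X) u, L u /\ idempotent S u /\ Tp_eq S open T u y x) ->
  exists u, L u /\ idempotent S u /\ Tp_eq S open T u x x.
Proof.
intros [y [u [Lu [Iu Hu]]]]. exists u. split; auto. split; auto.
assert (Uu := L_uf u Lu).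
destruct (plim_exists S X open T HD u (fun s => T s x) Uu) as [w Hw].
assert (H := Tp_comp S HS X open T HD u u y x w Uu Uu Hu Hw).
unfold idempotent in Iu. rewrite Iu in H.
assert (E := plim_unique S X open T HD u _ _ _ Uu Hu H). subst w. exact Hw.
Qed.

End MAIN.

Theorem lemma2p7 (S : R -> Prop) (X : Type) (open : (X -> Prop) -> Prop)
  (T : R -> X -> X) (L : ((R -> Prop) -> Prop) -> Prop) (x : X) :
  dense_subsemigroup S ->
  dynamical_system S open T ->
  minimal_left_ideal_Oplus S L ->
  let a := unif_recurrent_near_zero S open T x in
  let b := exists u, L u /\ Tp_eq S open T u x x in
  let c := exists (y : X) u, L u /\ idempotent S u /\ Tp_eq S open T u y x in
  let d := exists u, L u /\ idempotent S u /\ Tp_eq S open T u x x in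
  (a <-> b) /\ (b <-> c) /\ (c <-> d).
Proof.
intros HS HD HL. cbv zeta.
assert (db : (exists u, L u /\ idempotent S u /\ Tp_eq S open T u x x) -> exists u, L u /\ Tp_eq S open T u x x).
{ intros [u [Lu [_ H]]]. eauto. }
assert (dc : (exists u, L u /\ idempotent S u /\ Tp_eq S open T u x x) ->
   exists (y : X) u, L u /\ idempotent S u /\ Tp_eq S open T u y x).
{ intros [u [Lu [I H]]]. exists x, u. auto. }
split; [|split]; split.
- apply a_to_b; auto.
- apply b_to_a; auto.
- intro H. apply dc. apply b_to_d; auto.
- intro H. apply db. apply c_to_d; auto.
- apply c_to_d; auto.
- exact dc.
Qed.
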